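(* Let $q$ be a prime power and $n$ a positive integer with $\gcd(q,n)=1$. Iso-self-dual cyclic codes over $\mathbb{F}_q$ of length $n$ exist if and only if $0<\nu_2(n)<2\,\nu_2(q-1)$.
   Context: $R_n=\mathbb{F}_q[X]/\langle X^n-1\rangle$; each element is identified with its unique representative $a_0+a_1X+\dots+a_{n-1}X^{n-1}$ and with the word $(a_0,\dots,a_{n-1})\in\mathbb{F}_q^n$. A cyclic code of length $n$ is an ideal of $R_n$; $C^\perp$ is the Euclidean dual of $C$ in $\mathbb{F}_q^n$. Fix a primitive $n$-th root of unity $\theta$ in an extension field of $\mathbb{F}_q$. For $s\in\mathbb{Z}_n^*$ (unit group of $\mathbb{Z}/n\mathbb{Z}$) and $t\in\mathbb{Z}_n$ with $qt\equiv t\pmod n$ (so $\theta^t\in\mathbb{F}_q$), let $\varphi_{s,t}:R_n\to R_n$, $a(X)\mapsto a(\theta^{-t}X^{s^{-1}})\bmod (X^n-1)$, where $s^{-1}$ is a positive integer with $ss^{-1}\equiv1\pmod n$. A cyclic code $C\subseteq R_n$ is iso-self-dual if there exist such $s,t$ with $\varphi_{s,t}(C)=C^\perp$. For a nonzero integer $m$, $\nu_2(m)$ is the exponent of the largest power of $2$ dividing $m$; $\nu_2(0)=\infty$. *)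

(* Defs.v *)
From HB Require Import structures.
From mathcomp Require Import all_boot all_order all_algebra all_field.
Set Implicit Arguments. Unset Strict Implicit. Unset Printing Implicit Defensive.
Import GRing.Theory.
Local Open Scope ring_scope.

Section Codes.
Variable F : fieldType.

(* Elements of R_n = F[X]/<X^n-1> are identified with their unique
   representatives: polynomials of size <= n (degree < n).
   A code is a set (predicate) of such representatives. *)

Definition is_cyclic_code (n : nat) (C : {poly F} -> Prop) : Prop :=
  [/\ (forall p, C p -> (size p <= n)%N),
      C 0,
      (forall p r, C p -> C r -> C (p + r))
    & (forall a p, C p -> C ((a * p) %% ('X^n - 1)))].

(* Euclidean dual, words (a_0,...,a_{n-1}) <-> a_0 + ... + a_{n-1} X^{n-1}. *)
Definition dual_code (n : nat) (C : {poly F} -> Prop) : {poly F} -> Prop :=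
  fun v => (size v <= n)%N /\
           forall c, C c -> \sum_(i < n) v`_i * c`_i = 0.

Variable L : fieldType.
Variable iota : {rmorphism F -> L}.

(* phi_{s,t}(a) = a(theta^{-t} X^{s'}) mod (X^n - 1), with s' = s^{-1};
   computed in L[X] (theta lives in the extension L of F via iota). *)
Definition phi_st (theta : L) (n s' t : nat) (a : {poly F}) : {poly L} :=
  ((map_poly iota a) \Po ((theta ^+ t)^-1 *: 'X^s')) %% ('X^n - 1).

Definition iso_self_dual (q : nat) (theta : L) (n : nat) (C : {poly F} -> Prop) : Prop :=
  exists s t s' : nat,
    [/\ (s < n)%N /\ coprime s n, (t < n)%N /\ (q * t == t %[mod n])%N,
        (0 < s')%N /\ (s * s' == 1 %[mod n])%N &
        forall b : {poly L},
          (exists a, C a /\ phi_st theta n s' t a = b) <->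
          (exists a, dual_code n C a /\ map_poly iota a = b)].
End Codes.

Definition nu2 (m : nat) : nat := logn 2 m.

(* Main.v *)
Require Import Defs.
From HB Require Import structures.
From mathcomp Require Import all_boot all_order all_algebra all_field.
From mathcomp Require Import all_fingroup all_solvable.
From mathcomp Require Import zify.
From Stdlib Require Import Classical ClassicalEpsilon.
Set Implicit Arguments. Unset Strict Implicit. Unset Printing Implicit Defensive.
Import GRing.Theory.
Local Open Scope ring_scope.

Lemma mulmod_inj a m x y : coprime a m -> (a * x = a * y %[mod m])%N -> (x = y %[mod m])%N.
Proof.
case: m => [|m] cam e.
  by move: cam; rewrite /coprime gcdn0 => /eqP a1; move: e; rewrite a1 !mul1n.
have E := Euler_exp_totient cam.
have t0 : (0 < totient m.+1)%N by rewrite totient_gt0.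
have ex z : (z = a ^ (totient m.+1).-1 * (a * z) %[mod m.+1])%N.
  by rewrite mulnA -expnSr prednK // -modnMml E modnMml mul1n.
by rewrite (ex x) (ex y) -modnMmr e modnMmr.
Qed.

Local Open Scope nat_scope.


Lemma card_count n (P : pred nat) : #|[pred k : 'I_n | P k]| = count P (iota 0 n).
Proof.
by rewrite cardE /enum_mem size_filter -enumT -val_enum_ord count_map.
Qed.

Lemma count_res A m r : (r < A)%N -> count (fun k => k %% A == r) (iota 0 (m * A)) = m.
Proof.
move=> rA; elim: m => [|m IH] //.
rewrite mulSn addnC iotaD count_cat IH -addn1; congr (_ + _).
rewrite add0n -[m * A]addn0 iotaDl count_map.
rewrite (@eq_in_count _ _ (pred1 r)); last first.
  by move=> i; rewrite mem_iota /= add0n => iA; rewrite modnMDl modn_small.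
by rewrite (count_uniq_mem _ (iota_uniq 0 A)) mem_iota add0n rA.
Qed.

Lemma card_res n A r : (0 < A)%N -> (A %| n)%N -> (r < A)%N ->
  #|[pred k : 'I_n | k %% A == r]| = n %/ A.
Proof.
move=> A0 An rA; rewrite (card_count n (fun k => k %% A == r)).
by rewrite -{1}(divnK An) count_res.
Qed.

Lemma count_contra n A x0 (Z : nat -> bool) (psi : nat -> nat) :
  (0 < n)%N -> (A %| n)%N -> odd (n %/ A) ->
  (forall k, Z k = Z (k %% n)) ->
  (forall k1 k2, psi k1 = psi k2 %[mod n] -> k1 = k2 %[mod n]) ->
  (forall k, k = x0 %[mod A] -> psi k = x0 %[mod A]) ->
  (forall k, Z (psi k) = ~~ Z k) -> False.
Proof.
move=> n0 An oddn Zmod pinj pS pZ.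
have A0 : (0 < A)%N by apply: dvdn_gt0 An.
pose S := [set k : 'I_n | k %% A == x0 %% A].
pose f (k : 'I_n) : 'I_n := Ordinal (ltn_pmod (psi k) n0).
have finj : injective f.
  move=> k1 k2 /(congr1 val) /= e; apply: val_inj => /=.
  by rewrite -(modn_small (ltn_ord k1)) -(modn_small (ltn_ord k2)); exact: pinj.
have fS (k : 'I_n) : k %% A == x0 %% A -> (f k) %% A == x0 %% A.
  move=> /eqP e /=; rewrite modn_dvdm //; apply/eqP; exact: pS.
have fZ k : Z (f k) = ~~ Z k by rewrite /= -Zmod pZ.
pose ZZ := [set k : 'I_n | Z k].
have s1 : f @: (S :&: ZZ) \subset S :\: ZZ.
  apply/subsetP => y /imsetP [k]; rewrite !inE => /andP [kS kZ] ->.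
  by rewrite fZ kZ fS.
have s2 : f @: (S :\: ZZ) \subset S :&: ZZ.
  apply/subsetP => y /imsetP [k]; rewrite !inE => /andP [kZ kS] ->.
  by rewrite fZ kZ fS.
have c1 := subset_leq_card s1; have c2 := subset_leq_card s2.
rewrite !card_imset // in c1 c2.
have := cardsID ZZ S.
have -> : #|S| = n %/ A.
  by rewrite cardsE (@card_res n A (x0 %% A) A0 An) ?ltn_pmod.
move=> e; move: oddn; rewrite -e.
have -> : #|S :\: ZZ| = #|S :&: ZZ| by apply/eqP; rewrite eqn_leq c1 c2.
by rewrite addnn odd_double.
Qed.

Lemma two_dec m : (0 < m)%N -> exists d o, m = (2 ^ d * o)%N /\ odd o.
Proof.
move=> m0; have [o co e] := pfactor_coprime (isT : prime 2) m0.
by exists (logn 2 m), o; rewrite mulnC -coprime2n.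
Qed.

Lemma fix2 n q s' t :
  (0 < n)%N -> coprime q n -> (1 < q)%N -> (t <= n)%N -> (n %| t * (q - 1))%N -> coprime s' n ->
  ~~ ((0 < logn 2 n) && (logn 2 n < 2 * logn 2 (q - 1)))%N ->
  exists w x0, (w = s' * (n - 1) \/ w = s' * (n - 1) * q)%N /\
     (w * x0 + (n - t) = x0 %[mod 2 ^ logn 2 n])%N.
Proof.
move=> n0 cqn q1 tn ntq cs H.
set a := logn 2 n in H *; set b := logn 2 (q - 1) in H.
have An : (2 ^ a %| n)%N by rewrite pfactor_dvdn.
case: (posnP a) => [a0 | apos].
  by exists (s' * (n - 1))%N, 0%N; split; [left | rewrite a0 !modn1].
rewrite apos /= -leqNgt in H.
have q0 : (0 < q - 1)%N by rewrite subn_gt0.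
have [r cr eq] := pfactor_coprime (isT : prime 2) q0.
rewrite -/b in eq; rewrite coprime2n in cr.
have n2 : (2 %| n)%N by apply: dvdn_trans An; rewrite -{1}(expn1 2) dvdn_exp2l.
have s'odd : odd s'.
  by apply/negP => /negPn; rewrite -dvdn2 => s2; move: cs; rewrite /coprime => /eqP g; move: (dvdn_gcd 2 s' n); rewrite g s2 n2.
have nodd : odd (n - 1).
  by move: n2; rewrite dvdn2 -{1}(subnK n0) addn1 /=; case: (odd (n - 1)).
set u := (s' * (n - 1))%N.
have uodd : odd u by rewrite oddM s'odd nodd.
have u0 : (0 < u)%N by case: u uodd.
have bab : (b <= a - b)%N by lia.
have tdv : (2 ^ (a - b) %| t)%N.
  have : (2 ^ (a - b) * 2 ^ b %| t * r * 2 ^ b)%N.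
    by rewrite -expnD subnK ?(leq_trans bab) ?leq_subr // -mulnA -eq; apply: dvdn_trans ntq.
  rewrite dvdn_pmul2r ?expn_gt0 // Gauss_dvdl //.
  by apply: coprimeXl; rewrite coprime2n.
have [w [d [o [ew [ed [oo [dab w0]]]]]]] : exists w d o,
    [/\ (w = u \/ w = u * q)%N, (w - 1 = 2 ^ d * o)%N, odd o, (d <= a - b)%N & (0 < w)%N].
  case: (boolP (2 ^ (a - b).+1 %| u - 1)%N) => hu.
    have hb : (2 ^ b.+1 %| u - 1)%N by apply: dvdn_trans hu; rewrite dvdn_exp2l.
    have hb' : (2 ^ b %| u - 1)%N by apply: dvdn_trans hb; rewrite dvdn_exp2l.
    exists (u * q)%N, b, (u * r + (u - 1) %/ 2 ^ b)%N; split => //.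
    - by right.
    - have f1 := divnK hb'; move: f1 eq; set X := ((u - 1) %/ 2 ^ b)%N; set B := (2 ^ b)%N.
      have : (1 <= q)%N by lia.
      move: u0; clear; nia.
    - have h2 : (2 %| (u - 1) %/ 2 ^ b)%N.
        by rewrite -(@dvdn_pmul2r (2 ^ b)) ?expn_gt0 // divnK // -expnS.
      by rewrite oddD oddM uodd cr /=; move: h2; rewrite dvdn2 => ->.
    - by rewrite muln_gt0 u0 ltnW.
  have u1 : (0 < u - 1)%N.
    by rewrite subn_gt0 ltn_neqAle u0 andbT; apply/negP => /eqP eu; move: hu; rewrite -eu subnn dvdn0.
  have [d [o [e oo]]] := two_dec u1.
  exists u, d, o; split => //; first by left.
  rewrite leqNgt; apply: contra hu => hd; rewrite e; apply: dvdn_mulr; exact: dvdn_exp2l.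
have cop : coprime o (2 ^ a) by rewrite coprimeXr // coprime_sym coprime2n.
have E := Euler_exp_totient cop.
have t0 : (0 < totient (2 ^ a))%N by rewrite totient_gt0 expn_gt0.
have tdd : (2 ^ d %| t)%N by apply: dvdn_trans tdv; rewrite dvdn_exp2l.
exists w, (t %/ 2 ^ d * o ^ (totient (2 ^ a)).-1)%N; split => //.
set x0 := (t %/ 2 ^ d * o ^ (totient (2 ^ a)).-1)%N.
have e1 : (w * x0 = x0 + t * o ^ totient (2 ^ a))%N.
  rewrite -{1}(subnK w0) addnC mulnDl mul1n ed; congr (_ + _).
  rewrite /x0 -(prednK t0) expnS -[in RHS](divnK tdd); set P := (o ^ _)%N; set T := (t %/ _)%N; set D := (2 ^ d)%N; nia.
rewrite e1 -addnA [(_ + (n - t))%N]addnC addnA -modnDmr -modnMmr E modnMmr muln1 modnDmr.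
by rewrite -addnA subnK // -modnDmr (eqP An) addn0.
Qed.

Lemma coprime_of_inv s s' n : (s * s' = 1 %[mod n])%N -> coprime s' n.
Proof.
move=> e; have : coprime (s * s') n by rewrite -coprime_modl e coprime_modl coprime1n.
by rewrite coprimeMl => /andP [].
Qed.

Lemma arith_forward n q s s' t (Z : nat -> bool) :
  (0 < n)%N -> coprime q n -> (1 < q)%N -> (t <= n)%N -> (q * t = t %[mod n])%N ->
  (s * s' = 1 %[mod n])%N ->
  (forall k, Z k = Z (k %% n)) -> (forall k, Z (q * k) = Z k) ->
  (forall k, Z (s' * (k * (n - 1)) + (n - t)) = ~~ Z k) ->
  ((0 < logn 2 n) && (logn 2 n < 2 * logn 2 (q - 1)))%N.
Proof.
move=> n0 cqn q1 tn qt ss Zmod Zq Zg.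
apply/negPn/negP => H.
have ntq : (n %| t * (q - 1))%N.
  move: qt; rewrite -{1}(subnK (ltnW q1)) mulnDl mul1n addnC => e.
  have : (t + (q - 1) * t == t + 0 %[mod n])%N by rewrite addn0 e.
  by rewrite eqn_modDl mod0n mulnC.
have cs := coprime_of_inv ss.
have [w [x0 [ew ex]]] := fix2 n0 cqn q1 tn ntq cs H.
have cw : coprime w n.
  have cn1 : coprime (n - 1) n by rewrite subn1 coprimePn.
  by case: ew => ->; rewrite ?coprimeMl ?cs ?cn1 ?cqn.
have [m cm em] := pfactor_coprime (isT : prime 2) n0.
apply: (@count_contra n (2 ^ logn 2 n) x0 Z (fun k => w * k + (n - t))%N) => //.
- by rewrite pfactor_dvdn.
- by rewrite {1}em mulnK ?expn_gt0 // -coprime2n.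
- by move=> k1 k2 /eqP; rewrite eqn_modDr => /eqP; apply: mulmod_inj.
- by move=> k ek; rewrite -modnDml -modnMmr ek modnMmr modnDml.
- move=> k; case: ew => ->.
    by rewrite -Zg [(k * _)%N]mulnC mulnA.
  by rewrite -(Zq k) -Zg [((q * k) * _)%N]mulnC !mulnA.
Qed.


Lemma flip_bit H k : (0 < H)%N -> (H <= (k + H) %% (2 * H))%N = ~~ (H <= k %% (2 * H))%N.
Proof.
move=> H0; rewrite -modnDml.
have : (k %% (2 * H) < 2 * H)%N by rewrite ltn_pmod // muln_gt0 H0.
move: (k %% (2 * H))%N => r rl.
case: (ltnP r H) => h.
  by rewrite modn_small /=; lia.
have -> : (r + H = (r - H) + 2 * H)%N by lia.
by rewrite modnDr modn_small /=; lia.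
Qed.

Lemma arith_backward n q :
  (0 < n)%N -> coprime q n -> (1 < q)%N ->
  ((0 < logn 2 n) && (logn 2 n < 2 * logn 2 (q - 1)))%N ->
  exists t (Z : nat -> bool),
    [/\ (t < n)%N, (q * t = t %[mod n])%N, (forall k, Z k = Z (k %% n)),
        (forall k, Z (q * k) = Z k) &
        (forall k, Z ((n - 1) * (k * (n - 1)) + (n - t)) = ~~ Z k)].
Proof.
move=> n0 cqn q1 /andP [apos alt].
set a := logn 2 n in apos alt *; set b := logn 2 (q - 1) in alt.
have q0 : (0 < q - 1)%N by rewrite subn_gt0.
have [r cr eqr] := pfactor_coprime (isT : prime 2) q0.
have [m cm eqm] := pfactor_coprime (isT : prime 2) n0.
rewrite -/a in eqm; rewrite -/b in eqr; rewrite coprime2n in cr cm.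
set c := (a - b)%N.
have b0 : (0 < b)%N by lia.
have ca : (c < a)%N by lia.
have c1a : (c.+1 <= a)%N by lia.
have c1b : (c.+1 <= b)%N by lia.
have m0 : (0 < m)%N by case: m cm {eqm}.
set H := (2 ^ c)%N; set M := (2 ^ c.+1)%N.
have H0 : (0 < H)%N by rewrite expn_gt0.
have MH : M = (2 * H)%N by rewrite /M expnS.
have Mn : (M %| n)%N by rewrite eqm dvdn_mull // dvdn_exp2l.
have Mq : (M %| q - 1)%N by rewrite eqr dvdn_mull // dvdn_exp2l.
exists (m * H)%N, (fun k => H <= k %% M)%N; split.
- by rewrite eqm ltn_pmul2l // ltn_exp2l.
- have dv : (n %| (q - 1) * (m * H))%N.
    have -> : ((q - 1) * (m * H) = m * 2 ^ (c + b) * r)%N.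
      by rewrite eqr expnD /H; set X := (2 ^ b)%N; set Y := (2 ^ c)%N; nia.
    by rewrite eqm dvdn_mulr // dvdn_pmul2l // dvdn_exp2l //; lia.
  by rewrite -{1}(subnK (ltnW q1)) mulnDl mul1n -modnDml (eqP dv) add0n.
- by move=> k; rewrite modn_dvdm.
- move=> k; rewrite -{1}(subnK (ltnW q1)) mulnDl mul1n -modnDml.
  by rewrite (eqP (dvdn_mulr k Mq)) add0n.
- move=> k; rewrite MH -flip_bit // -MH.
  have [y ey] : exists y, n = (y * M)%N by exists (n %/ M); rewrite divnK.
  have n2 : (2 <= n)%N.
    have : (2 %| n)%N by apply: dvdn_trans Mn; rewrite /M expnS dvdn_mulr.
    move=> h2; move: h2 n0; rewrite dvdn2; case: (n) => [|[|]] //.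
  have e1 : ((n - 1) * (k * (n - 1)) = k + M * (y * (n - 2) * k))%N.
    have [p ep] : exists p, n = p.+2 by exists (n - 2)%N; lia.
    rewrite ep in ey *; rewrite !subSS ?subn0 ?subn1 /=.
    have := congr1 (muln (k * p)) ey; clear; nia.
  set x := (m * (2 ^ (a - c) - 1))%N.
  have xo : odd x.
    rewrite oddM -coprime2n cm /= oddB ?expn_gt0 // oddX /=.
    by have -> : (a - c == 0)%N = false by apply/negbTE; lia.
  have e2 : (n - m * H = H + M * x./2)%N.
    have hx : (x = (x./2).*2 + 1)%N by rewrite -{1}(odd_double_half x) xo addnC.
    have hE : (2 ^ a = H * 2 ^ (a - c))%N by rewrite /H -expnD subnKC //; exact: ltnW.
    have E0 : (0 < 2 ^ (a - c))%N by rewrite expn_gt0.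
    move: hx hE E0; rewrite /x eqm MH -muln2; move: (x./2) (2 ^ (a - c))%N (2 ^ a)%N => h E A.
    clear; nia.
  rewrite e1 e2 addnAC addnA -addnA -mulnDr -modnDmr.
  by rewrite [(M * _)%N]mulnC modnMl addn0.
Qed.


Lemma sq1 n k : (0 < n)%N -> (k * (n - 1) * (n - 1) = k %[mod n])%N.
Proof.
move=> n0; case: n n0 => [|[|p]] // _; first by rewrite !modn1.
have -> : (k * (p.+2 - 1) * (p.+2 - 1) = k * p * p.+2 + k)%N.
  rewrite !subSS ?subn0 ?subn1 /=; nia.
by rewrite modnMDl.
Qed.

Lemma modF2 n s s' t j : (t <= n)%N -> (s * s' = 1 %[mod n])%N ->
  (t * s + (s' * j + (n - t)) * s = j %[mod n])%N.
Proof.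
move=> tn ss.
have -> : (t * s + (s' * j + (n - t)) * s = (s * s') * j + s * n)%N.
  rewrite mulnDl addnCA -mulnDl subnKC //; nia.
by rewrite -modnDmr modnMl addn0 -modnMml ss modnMml mul1n.
Qed.

Lemma modF1 n s s' t k : (0 < n)%N -> (t <= n)%N -> (s * s' = 1 %[mod n])%N ->
  (s' * ((t * s + k * s) * (n - 1) * (n - 1)) + (n - t) = k %[mod n])%N.
Proof.
move=> n0 tn ss.
rewrite -modnDml -modnMmr sq1 // modnMmr modnDml.
have -> : (s' * (t * s + k * s) + (n - t) = (s * s') * (t + k) + (n - t))%N by nia.
rewrite -modnDml -modnMml ss modnMml mul1n modnDml -addnA [(k + _)%N]addnC addnA subnKC //.
by rewrite -modnDml modnn add0n.
Qed.

Local Open Scope ring_scope.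
Section Frob.
Variables (R : comNzRingType) (q : nat) (qnat : [pchar R].-nat q).
Definition frobq of [pchar R].-nat q := fun x : R => x ^+ q.
Lemma frobq_is_nmod : nmod_morphism (frobq qnat).
Proof.
split; rewrite /frobq; first by rewrite expr0n; case: q qnat.
by move=> x y; rewrite exprDn_pchar.
Qed.
Lemma frobq_is_monoid : monoid_morphism (frobq qnat).
Proof. by split; rewrite /frobq ?expr1n // => x y; rewrite exprMn. Qed.
HB.instance Definition _ := GRing.isNmodMorphism.Build R R (frobq qnat) frobq_is_nmod.
HB.instance Definition _ := GRing.isMonoidMorphism.Build R R (frobq qnat) frobq_is_monoid.
End Frob.

Section Main.
Variables (F : finFieldType) (L : fieldType) (iota : {rmorphism F -> L}) (theta : L) (n : nat).
Hypotheses (n_gt0 : (0 < n)%N) (copqn : coprime #|F| n) (prim : n.-primitive_root theta).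
Local Notation q := #|F|.

Definition ev (c : {poly F}) (k : nat) : L := (map_poly iota c).[theta ^+ k].

Lemma th_mod k : theta ^+ (k %% n) = theta ^+ k.
Proof. exact: prim_expr_mod. Qed.

Lemma th_eqmod k1 k2 : (k1 = k2 %[mod n])%N -> theta ^+ k1 = theta ^+ k2.
Proof. by move=> e; rewrite -th_mod e th_mod. Qed.

Lemma ev_eqmod c k1 k2 : (k1 = k2 %[mod n])%N -> ev c k1 = ev c k2.
Proof. by move=> e; rewrite /ev (th_eqmod e). Qed.

Lemma q_gt1 : (1 < q)%N. Proof. exact: finNzRing_gt1. Qed.

Lemma qnat : [pchar L].-nat q.
Proof.
have [p pp pc] := finPcharP F.
have pg : p.-nat #|[set: F]| by exact/abelem_pgroup/fin_ring_pchar_abelem.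
rewrite cardsT in pg.
have pL : p \in [pchar L] by exact: rmorph_pchar pc.
by rewrite (eq_pnat _ (pcharf_eq pL)).
Qed.

Lemma frob_iota a : iota a ^+ q = iota a.
Proof. by rewrite -rmorphXn expf_card. Qed.

Lemma fixed_in_image y : y ^+ q = y -> exists a, iota a = y.
Proof.
move=> fy; case: (pickP (fun a => iota a == y)) => [a /eqP ea | H]; first by exists a.
exfalso.
pose rs := y :: map iota (enum F).
have sz : size ('X^q - 'X : {poly L}) = q.+1.
  by rewrite size_polyDl size_polyXn // size_polyN size_polyX ltnS q_gt1.
have nz : ('X^q - 'X : {poly L}) != 0 by rewrite -size_poly_eq0 sz.
have := max_poly_roots nz (rs := rs).
rewrite sz /= size_map -cardE ltnn.
move=> h; apply: (@notF _); apply: h.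
  rewrite rootE !hornerE fy subrr eqxx /=; apply/allP => x /mapP [a _ ->].
  by rewrite rootE !hornerE frob_iota subrr.
rewrite map_inj_uniq ?enum_uniq; last exact: fmorph_inj.
rewrite andbT; apply/mapP => -[a _ ea]; by move: (H a); rewrite /= ea eqxx.
Qed.

Lemma th_neq0 : theta != 0.
Proof.
apply/negP => /eqP t0; have := prim_expr_order prim.
by rewrite t0 expr0n; case: n n_gt0 => // m _ /eqP; rewrite eq_sym oner_eq0.
Qed.

Lemma thXn : theta ^+ n = 1. Proof. exact: prim_expr_order. Qed.

Lemma ev_q c k : ev c (q * k) = ev c k ^+ q.
Proof.
have -> : ev c k ^+ q = frobq qnat (ev c k) by [].
have e1 : map_poly (frobq qnat) (map_poly iota c) = map_poly iota c.
  rewrite -map_poly_comp; apply: eq_map_poly => a /=; exact: frob_iota.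
by rewrite /ev -horner_map /= e1 /frobq -exprM mulnC.
Qed.

Lemma poly_eq_roots (P Q : {poly L}) :
  (size P <= n)%N -> (size Q <= n)%N ->
  (forall j, (j < n)%N -> P.[theta ^+ j] = Q.[theta ^+ j]) -> P = Q.
Proof.
move=> sP sQ H; apply/eqP; rewrite -subr_eq0; apply/eqP.
apply: (@roots_geq_poly_eq0 _ _ (map (fun j : 'I_n => theta ^+ j) (enum 'I_n))).
- apply/allP => x /mapP [j _ ->]; rewrite rootE hornerD hornerN H ?subrr //.
- rewrite map_inj_uniq ?enum_uniq // => i j /eqP; rewrite (eq_prim_root_expr prim).
  by rewrite !modn_small // => /eqP /val_inj.
- rewrite size_map -cardE card_ord; apply: leq_trans (size_polyD _ _) _.
  by rewrite size_polyN geq_max sP sQ.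
Qed.

Lemma n_neq0 : (n%:R : L) != 0.
Proof.
rewrite -(rmorph_nat iota) fmorph_eq0.
have [p pp pc] := finPcharP F.
rewrite -(dvdn_pcharf pc); apply/negP => pn.
have pq : (p %| q)%N.
  have pg : p.-nat #|[set: F]| by exact/abelem_pgroup/fin_ring_pchar_abelem.
  rewrite cardsT in pg.
  have [k ek] := p_natP pg.
  have k0 : (0 < k)%N by case: k ek => // e; have := q_gt1; rewrite e.
  by rewrite ek -(prednK k0) expnS dvdn_mulr.
have := copqn; rewrite /coprime => /eqP g1.
have : (p %| 1)%N by rewrite -g1 dvdn_gcd pq pn.
by rewrite dvdn1 => /eqP p1; move: pp; rewrite p1.
Qed.

Definition Xn1 (R : nzRingType) : {poly R} := 'X^n - 1.

Lemma Xn1_neq0 (R : nzRingType) : Xn1 R != 0.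
Proof. by rewrite -size_poly_eq0 /Xn1 -polyC1 size_XnsubC. Qed.

Lemma size_Xn1 (R : nzRingType) : size (Xn1 R) = n.+1.
Proof. by rewrite /Xn1 -polyC1 size_XnsubC. Qed.

Lemma map_Xn1 : map_poly iota (Xn1 F) = Xn1 L.
Proof. by rewrite /Xn1 rmorphB /= map_polyXn rmorph1. Qed.

Lemma horner_modX (P : {poly L}) k : (P %% Xn1 L).[theta ^+ k] = P.[theta ^+ k].
Proof.
rewrite {2}(divp_eq P (Xn1 L)) hornerD hornerM /Xn1 !hornerE -exprM mulnC exprM thXn.
by rewrite expr1n subrr mulr0 add0r.
Qed.

Lemma ev_modX c k : ev (c %% Xn1 F) k = ev c k.
Proof. by rewrite /ev map_modp map_Xn1 horner_modX. Qed.

Lemma ev0 k : ev 0 k = 0. Proof. by rewrite /ev rmorph0 horner0. Qed.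
Lemma evD c d k : ev (c + d) k = ev c k + ev d k.
Proof. by rewrite /ev rmorphD hornerD. Qed.
Lemma evM c d k : ev (c * d) k = ev c k * ev d k.
Proof. by rewrite /ev rmorphM hornerM. Qed.

Lemma horner_compZX (P : {poly L}) (l : L) e k :
  (P \Po (l *: 'X^e)).[theta ^+ k] = P.[l * theta ^+ (k * e)].
Proof. by rewrite horner_comp hornerZ hornerXn -exprM. Qed.

Lemma ev_comp v nu m e k : iota nu = theta ^+ m ->
  ev (v \Po (nu *: 'X^e)) k = ev v (m + k * e).
Proof.
move=> en; rewrite /ev map_comp_poly map_polyZ map_polyXn en horner_compZX.
by rewrite exprD.
Qed.

Lemma inv_thX t : (t <= n)%N -> (theta ^+ t)^-1 = theta ^+ (n - t).
Proof.
move=> tn; have h : theta ^+ t * theta ^+ (n - t) = 1 by rewrite -exprD subnKC // thXn.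
by rewrite -[LHS]mulr1 -h mulrA mulVf ?mul1r // expf_neq0 // th_neq0.
Qed.

Lemma phi_eval s' t a j : (t <= n)%N ->
  (phi_st iota theta n s' t a).[theta ^+ j] = ev a (s' * j + (n - t)).
Proof.
move=> tn; rewrite /phi_st -[X in _ %% X]/(Xn1 L) horner_modX horner_compZX inv_thX //.
by rewrite /ev -exprD addnC mulnC.
Qed.

Lemma orth m : \sum_(j < n) theta ^+ (j * m) = if (n %| m)%N then n%:R else 0.
Proof.
case: ifP => nm.
  rewrite (eq_bigr (fun _ => 1)) ?sumr_const ?card_ord // => j _.
  by rewrite mulnC exprM -th_mod (eqP nm) expr0 expr1n.
have z1 : theta ^+ m != 1.
  by rewrite -(expr0 theta) (eq_prim_root_expr prim) mod0n -/(dvdn n m) nm.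
have : (theta ^+ m - 1) * \sum_(j < n) theta ^+ (j * m) = 0.
  rewrite (eq_bigr (fun j : 'I_n => (theta ^+ m) ^+ j)) => [|j _]; last by rewrite -exprM mulnC.
  by rewrite -subrX1 -exprM mulnC exprM thXn expr1n subrr.
by move/eqP; rewrite mulf_eq0 subr_eq0 (negbTE z1) => /eqP.
Qed.

Lemma dvd_comb i l : (i < n)%N -> (l < n)%N -> (n %| (n - 1) * i + l)%N = (l == i).
Proof.
move=> il ll.
have e : ((n - 1) * i + l + i = i * n + l)%N by rewrite mulnBl mul1n addnAC subnK ?leq_pmull // mulnC.
rewrite /dvdn -[X in _ == X](mod0n n) -(eqn_modDr i) e add0n modnMDl !modn_small //.
Qed.

Lemma dft (v c : {poly F}) : (size v <= n)%N -> (size c <= n)%N ->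
  n%:R * iota (\sum_(i < n) v`_i * c`_i) =
  \sum_(j < n) ev v (j * (n - 1)) * ev c j.
Proof.
move=> sv sc.
have sv' : (size (map_poly iota v) <= n)%N by rewrite size_map_poly.
have sc' : (size (map_poly iota c) <= n)%N by rewrite size_map_poly.
rewrite (eq_bigr (fun j : 'I_n => \sum_(i < n) \sum_(l < n)
   (iota v`_i * iota c`_l) * theta ^+ (j * ((n - 1) * i + l)))); last first.
  move=> j _; rewrite /ev (horner_coef_wide _ sv') (horner_coef_wide _ sc') mulr_suml.
  apply: eq_bigr => i _; rewrite mulr_sumr; apply: eq_bigr => l _.
  rewrite !coef_map /= mulnDr exprD -!exprM mulrACA; congr (_ * (_ * _)).
  by rewrite mulnA [(j * _)%N]mulnC.
rewrite exchange_big /= (eq_bigr (fun i : 'I_n => iota (v`_i * c`_i) * n%:R)); last first.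
  move=> i _; rewrite exchange_big /=.
  rewrite (eq_bigr (fun l : 'I_n => if l == i then iota (v`_i * c`_i) * n%:R else 0)).
    by rewrite -big_mkcond big_pred1_eq.
  move=> l _; rewrite -mulr_sumr orth dvd_comb //.
  case: (eqVneq l i) => [->|ne]; first by rewrite eqxx rmorphM.
  have ne' : (nat_of_ord l == nat_of_ord i) = false := negbTE ne.
  by rewrite ne' mulr0.
by rewrite raddf_sum mulr_sumr; apply: eq_bigr => i _; rewrite mulrC.
Qed.

Lemma ev_Xk k j : ev ('X^k) j = theta ^+ (j * k).
Proof. by rewrite /ev map_polyXn hornerXn -exprM. Qed.

Section Cyc.
Variable C : {poly F} -> Prop.
Hypothesis Ccyc : is_cyclic_code n C.

Definition Zc j := forall c, C c -> ev c j = 0.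

Lemma dual_prod v c : dual_code n C v -> C c ->
  forall j, ev v (j * (n - 1)) * ev c j = 0.
Proof.
case: Ccyc => Csz C0 CD CM [sv dv] Cc.
have H k : (k < n)%N -> \sum_(j < n) (ev v (j * (n - 1)) * ev c j) * theta ^+ (k * j) = 0.
  move=> kn; pose ck := ('X^k * c) %% ('X^n - 1).
  have Cck : C ck by exact: CM.
  have sck : (size ck <= n)%N by rewrite -ltnS -(size_Xn1 F) ltn_modp Xn1_neq0.
  have e : 0 = \sum_(j < n) ev v (j * (n - 1)) * ev ck j.
    by have := dft sv sck; rewrite dv // rmorph0 mulr0.
  rewrite [RHS]e.
  apply: eq_bigr => j _; rewrite -[ck]/(('X^k * c) %% Xn1 F) ev_modX evM ev_Xk.
  by rewrite mulrCA mulrC mulnC.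
pose W := \poly_(j < n) (ev v (j * (n - 1)) * ev c j).
have W0 : W = 0.
  apply: poly_eq_roots; rewrite ?size_poly ?size_poly0 // => k kn.
  rewrite horner0 horner_poly -[RHS](H k kn); apply: eq_bigr => j _.
  by rewrite -exprM mulnC.
move=> j; have [jn|jn] := ltnP j n.
  by have := congr1 (fun P : {poly L} => P`_j) W0; rewrite coef_poly jn coef0.
rewrite (ev_eqmod c (k2 := j %% n)) ?modn_mod // (ev_eqmod v (k2 := (j %% n) * (n - 1))) ?modnMml //.
by have := congr1 (fun P : {poly L} => P`_(j %% n)) W0; rewrite coef_poly ltn_pmod // coef0.
Qed.

Lemma dual_char v : dual_code n C v <->
  (size v <= n)%N /\ forall j, ~ Zc j -> ev v (j * (n - 1)) = 0.
Proof.
split.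
  move=> dv; split; first by case: dv.
  move=> j nZ; apply/eqP/negP => /negP ne; apply: nZ => c Cc.
  by have /eqP := dual_prod dv Cc j; rewrite mulf_eq0 (negbTE ne) => /eqP.
move=> [sv H]; split => // c Cc.
case: Ccyc => Csz _ _ _.
have e := dft sv (Csz _ Cc); rewrite [RHS]big1 in e.
  by move/eqP: e; rewrite mulf_eq0 (negbTE n_neq0) fmorph_eq0 => /eqP.
move=> j _; case: (classic (Zc j)) => [Zj|nZj]; first by rewrite Zj // mulr0.
by rewrite H // mul0r.
Qed.

End Cyc.

Definition pre (y : L) : F := odflt 0 [pick a | iota a == y].

Lemma pre_spec y : y ^+ q = y -> iota (pre y) = y.
Proof.
move=> fy; rewrite /pre; case: pickP => [a /eqP //|H].
by have [a ea] := fixed_in_image fy; move: (H a); rewrite ea eqxx.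
Qed.

Lemma prod_poly (S : nat -> bool) :
  (forall k, S k = S (k %% n)%N) -> (forall k, S (q * k)%N = S k) ->
  forall j, ~~ S j -> exists p : {poly F},
    [/\ (size p <= n)%N, (forall k, S k -> ev p k = 0) & ev p j != 0].
Proof.
move=> Smod Sq j Sj.
pose P := \prod_(k : 'I_n | S k) ('X - (theta ^+ k)%:P).
have fixP : map_poly (frobq qnat) P = P.
  rewrite rmorph_prod /=.
  pose h (k : 'I_n) : 'I_n := Ordinal (ltn_pmod (q * k)%N n_gt0).
  have hinj : injective h.
    move=> k1 k2 /(congr1 val) /= e; apply: val_inj => /=.
    by rewrite -(modn_small (ltn_ord k1)) -(modn_small (ltn_ord k2)); exact: mulmod_inj copqn e.
  rewrite [RHS](reindex_inj hinj) /=.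
  apply: eq_big => k; first by rewrite -Smod Sq.
  move=> _; rewrite map_polyXsubC /= th_mod /frobq -exprM mulnC //.
pose P0 := \poly_(i < size P) pre P`_i.
have mP0 : map_poly iota P0 = P.
  apply/polyP => i; rewrite coef_map coef_poly; case: ltnP => il.
    apply: pre_spec; have := congr1 (fun Q : {poly L} => Q`_i) fixP.
    by rewrite coef_map.
  by rewrite nth_default //; apply/eqP; rewrite fmorph_eq0.
have sP : (size P <= n)%N.
  rewrite /P -big_filter size_prod_XsubC.
  rewrite deprecated_filter_index_enum -cardE.
  pose S' := [pred k : 'I_n | S k].
  have : (0 < #|[predC S']|)%N.
    by apply/card_gt0P; exists (Ordinal (ltn_pmod j n_gt0)); rewrite !inE /= -Smod.
  move=> h; rewrite -(ltn_add2l #|[predC S']|) addnC cardC card_ord -{1}[n]add0n ltn_add2r //.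
exists P0; split.
- by apply: leq_trans (size_poly _ _) sP.
- move=> k Sk; rewrite /ev mP0 -th_mod horner_prod.
  rewrite (bigD1 (Ordinal (ltn_pmod k n_gt0))) /=; last by rewrite -Smod.
  by rewrite hornerXsubC subrr mul0r.
- rewrite /ev mP0 horner_prod; apply/prodf_neq0 => i Si.
  rewrite hornerXsubC subr_eq0 (eq_prim_root_expr prim); apply: contra Sj => /eqP e.
  by rewrite Smod e modn_small.
Qed.

Lemma q_gt0 : (0 < q)%N. Proof. exact: ltnW q_gt1. Qed.

Section Fwd.
Variable C : {poly F} -> Prop.
Hypothesis Ccyc : is_cyclic_code n C.

Lemma Zc_mod j : Zc C j <-> Zc C (j %% n)%N.
Proof.
split => H c Cc; first by rewrite (ev_eqmod c (k2 := j)) ?modn_mod // H.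
by rewrite (ev_eqmod c (k2 := (j %% n)%N)) ?modn_mod // H.
Qed.

Lemma Zc_eqmod j1 j2 : (j1 = j2 %[mod n])%N -> Zc C j1 <-> Zc C j2.
Proof. by move=> e; rewrite Zc_mod e -Zc_mod. Qed.

Lemma Zc_q j : Zc C j -> Zc C (q * j)%N.
Proof. by move=> H c Cc; rewrite ev_q H // expr0n; case: q q_gt0. Qed.

Lemma Zc_qX e j : Zc C j -> Zc C (q ^ e * j)%N.
Proof.
elim: e => [|e IH] H; first by rewrite expn0 mul1n.
by rewrite expnS -mulnA; apply: Zc_q; apply: IH.
Qed.

Lemma Zc_qinv j : Zc C (q * j)%N -> Zc C j.
Proof.
move=> H; have := Zc_qX (totient n).-1 H.
rewrite mulnA -expnSr prednK ?totient_gt0 //.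
apply: (proj1 (Zc_eqmod _)).
by rewrite -modnMml Euler_exp_totient // modnMml mul1n.
Qed.

Definition Zb j : bool := if excluded_middle_informative (Zc C j) then true else false.

Lemma ZbP j : Zb j <-> Zc C j.
Proof. by rewrite /Zb; case: excluded_middle_informative. Qed.

Lemma Zb_eq j1 j2 : (Zc C j1 <-> Zc C j2) -> Zb j1 = Zb j2.
Proof.
move=> e; apply/idP/idP => /ZbP h; apply/ZbP; by apply e.
Qed.

Lemma forward_key s' t :
  (t <= n)%N ->
  (forall b : {poly L},
    (exists a, C a /\ phi_st iota theta n s' t a = b) <->
    (exists a, dual_code n C a /\ map_poly iota a = b)) ->
  forall j, Zc C (s' * j + (n - t))%N <-> ~ Zc C (j * (n - 1))%N.
Proof.
move=> tn Hb j.
transitivity (forall b : {poly L}, (exists a, dual_code n C a /\ map_poly iota a = b) -> b.[theta ^+ j] = 0).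
  split.
    move=> Z b /Hb [a [Ca <-]]; by rewrite phi_eval // Z.
  move=> P c Cc; rewrite -phi_eval //; apply: P; apply/Hb; by exists c.
split.
  move=> Q Zj.
  pose S k := ~~ Zb (k * (n - 1))%N.
  have Smod k : S k = S (k %% n)%N.
    by rewrite /S (@Zb_eq (k * (n - 1))%N ((k %% n) * (n - 1))%N) //; apply: Zc_eqmod; rewrite modnMml.
  have Sq k : S (q * k)%N = S k.
    rewrite /S (@Zb_eq (q * k * (n - 1))%N (k * (n - 1))%N) //.
    by rewrite -mulnA; split; [apply: Zc_qinv | apply: Zc_q].
  have Sj : ~~ S j by rewrite /S negbK; apply/ZbP.
  have [p [sp Sp pj]] := prod_poly Smod Sq Sj.
  have dp : dual_code n C p.
    apply/(dual_char Ccyc); split => // k nZ; apply: Sp.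
    rewrite /S; apply/negP => /ZbP; move/(Zc_eqmod (sq1 k n_gt0)); exact: nZ.
  by move/eqP: pj; apply; apply: Q; exists p.
move=> nZ b [v [dv <-]].
have [_ H] := proj1 (dual_char Ccyc v) dv.
have := H _ nZ; rewrite -/(ev v _) => h.
by rewrite -/(ev v j) (ev_eqmod v (k2 := (j * (n - 1) * (n - 1))%N)) // sq1.
Qed.

End Fwd.

Lemma thX_fixed m : (q * m = m %[mod n])%N -> (theta ^+ m) ^+ q = theta ^+ m.
Proof. by move=> e; rewrite -exprM mulnC; apply: th_eqmod. Qed.

Section Bwd.
Variables (s s' t : nat) (Z : nat -> bool).
Hypotheses (tn : (t <= n)%N) (qt : (q * t = t %[mod n])%N) (ss : (s * s' = 1 %[mod n])%N)
  (Zmod : forall k, Z k = Z (k %% n)%N) (Zq : forall k, Z (q * k)%N = Z k)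
  (Zg : forall k, Z (s' * (k * (n - 1)) + (n - t))%N = ~~ Z k).

Definition Cz (p : {poly F}) : Prop := (size p <= n)%N /\ forall k, Z k -> ev p k = 0.

Lemma Cz_cyc : is_cyclic_code n Cz.
Proof.
split.
- by move=> p [].
- by split; rewrite ?size_poly0 // => k _; rewrite ev0.
- move=> p r [sp Hp] [sr Hr]; split.
    by apply: leq_trans (size_polyD _ _) _; rewrite geq_max sp sr.
  by move=> k Zk; rewrite evD Hp ?Hr ?addr0.
- move=> a p [sp Hp]; split.
    by rewrite -ltnS -(size_Xn1 F) ltn_modp Xn1_neq0.
  by move=> k Zk; rewrite -[_ %% _]/((a * p) %% Xn1 F) ev_modX evM Hp ?mulr0.
Qed.

Lemma Zc_Z j : Zc Cz j -> Z j.
Proof.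
move=> H; apply/negPn/negP => nZ.
have [p [sp Hp pj]] := prod_poly Zmod Zq nZ.
by move/eqP: pj; apply; apply: H; split.
Qed.

Lemma Z_Zc j : Z j -> Zc Cz j.
Proof. by move=> Zj c [_ Hc]; apply: Hc. Qed.

Lemma bwd_main (b : {poly L}) :
  (exists a, Cz a /\ phi_st iota theta n s' t a = b) <->
  (exists a, dual_code n Cz a /\ map_poly iota a = b).
Proof.
split.
  move=> [a [[sa Ha] <-]].
  have fx : ((theta ^+ t)^-1) ^+ q = (theta ^+ t)^-1 by rewrite exprVn thX_fixed.
  pose mu := pre (theta ^+ t)^-1.
  have emu : iota mu = (theta ^+ t)^-1 by apply: pre_spec.
  exists ((a \Po (mu *: 'X^s')) %% Xn1 F); split; last first.
    by rewrite map_modp map_comp_poly map_polyZ map_polyXn map_Xn1 emu.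
  apply/(dual_char Cz_cyc); split.
    by rewrite -ltnS -(size_Xn1 F) ltn_modp Xn1_neq0.
  move=> j nZ; rewrite /ev map_modp map_comp_poly map_polyZ map_polyXn map_Xn1 emu.
  rewrite -/(phi_st iota theta n s' t a) phi_eval //; apply: Ha.
  by rewrite Zg; apply/negP => Zj; apply: nZ; apply: Z_Zc.
move=> [v [dv <-]].
have fx : (theta ^+ (t * s)) ^+ q = theta ^+ (t * s).
  by apply: thX_fixed; rewrite mulnA -modnMml qt modnMml.
pose nu := pre (theta ^+ (t * s)).
have enu : iota nu = theta ^+ (t * s) by apply: pre_spec.
have [sv Hv] := proj1 (dual_char Cz_cyc v) dv.
set a := (v \Po (nu *: 'X^s)) %% Xn1 F.
have eva k : ev a k = ev v (t * s + k * s)%N by rewrite /a ev_modX; apply: ev_comp.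
exists a; split.
  split; first by rewrite -ltnS -(size_Xn1 F) ltn_modp Xn1_neq0.
  move=> k Zk; rewrite eva.
  set j := ((t * s + k * s) * (n - 1))%N.
  have nZj : ~ Zc Cz j.
    move/Zc_Z => Zj.
    have : Z (s' * (j * (n - 1)) + (n - t))%N = Z k.
      by rewrite Zmod [RHS]Zmod; congr Z; rewrite /j modF1.
    by rewrite Zg Zj Zk.
  have := Hv j nZj; rewrite /j (ev_eqmod v (k2 := (t * s + k * s)%N)) // sq1 //.
apply: poly_eq_roots.
- by rewrite /phi_st -ltnS -(size_Xn1 L) ltn_modp Xn1_neq0.
- by rewrite size_map_poly.
- move=> j jn; rewrite phi_eval // eva -/(ev v j); apply: ev_eqmod.
  exact: modF2.
Qed.

End Bwd.

End Main.

Unset Implicit Arguments.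
Set Strict Implicit.

Theorem theorem4p1 (F : finFieldType) (n : nat)
    (L : fieldType) (iota : {rmorphism F -> L}) (theta : L) :
  (0 < n)%N -> coprime #|F| n -> n.-primitive_root theta ->
  (exists C : {poly F} -> Prop,
      is_cyclic_code n C /\ iso_self_dual iota #|F| theta n C) <->
  (0 < nu2 n /\ nu2 n < 2 * nu2 (#|F| - 1))%N.
Proof.
move=> n0 cqn prim; rewrite /nu2; split.
  move=> [C [Ccyc [s [t [s' [[sn cs] [tn qt] [s'0 ss] Hb]]]]]].
  have key := forward_key n0 cqn prim Ccyc (ltnW tn) Hb.
  pose Z := Zb iota theta C.
  have Zmod k : Z k = Z (k %% n)%N by apply: Zb_eq; apply: Zc_mod.
  have Zq k : Z (#|F| * k)%N = Z k.
    by apply: Zb_eq; split; [apply: (Zc_qinv n0 cqn prim) | apply: Zc_q].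
  have Zg k : Z (s' * (k * (n - 1)) + (n - t))%N = ~~ Z k.
    apply/idP/idP.
      move=> /ZbP /key h; apply/negP => /ZbP hk; apply: h.
      by apply: (proj2 (Zc_eqmod iota prim C (sq1 k n0))).
    move=> /negP h; apply/ZbP/key => hk; apply: h; apply/ZbP.
    by apply: (proj1 (Zc_eqmod iota prim C (sq1 k n0))).
  have := arith_forward (s := s) n0 cqn (q_gt1 F) (ltnW tn) (eqP qt) (eqP ss) Zmod Zq Zg.
  by case/andP.
move=> [a0 alt].
have [t [Z [tn qt Zmod Zq Zg]]] := arith_backward n0 cqn (q_gt1 F) (introT andP (conj a0 alt)).
have n2 : (2 <= n)%N.
  have : (2 %| n)%N by move: a0; rewrite logn_gt0 mem_primes => /and3P [].
  rewrite dvdn2.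
  by move: n0; case: (n) => [|[|]].
have ss : ((n - 1) * (n - 1) = 1 %[mod n])%N by have := sq1 1 n0; rewrite mul1n.
exists (Cz iota theta n Z); split; first exact: Cz_cyc.
exists (n - 1)%N, t, (n - 1)%N; split.
- by split; [rewrite subn1 prednK // ltnSn | rewrite subn1 coprimePn].
- by split => //; apply/eqP.
- by split; [rewrite subn_gt0 | apply/eqP].
- move=> b; exact: (bwd_main iota n0 cqn prim (ltnW tn) qt ss Zmod Zq Zg).
Qed.
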